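(* There exists a universal constant $A\ge1$ such that for every infinite finitely generated group $\Gamma$ and every finite symmetric generating set $S$ of $\Gamma$, there is a configuration $\xi\in\{0,1\}^\Gamma$ such that for every integer $k\ge1$ and all $g,h\in\Gamma$ with $d_S(g,h)=k$, there exists $t\in\Gamma$ with $|t|_S\le kA$ and $\xi(gt)\neq\xi(ht)$.
   Context: $d_S$ is the word metric of the right Cayley graph $\mathrm{Cay}(\Gamma,S)$ (edges $\{g,gs\}$, $s\in S$), and $|t|_S=d_S(t,1_\Gamma)$. *)

(* Defs.v *)
From Stdlib Require Export Reals List.
Set Implicit Arguments.

Record Group := {
  carrier :> Type;
  gmul : carrier -> carrier -> carrier;
  gone : carrier;
  ginv : carrier -> carrier;
  gmul_assoc : forall x y z, gmul x (gmul y z) = gmul (gmul x y) z;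
  gmul_1l : forall x, gmul gone x = x;
  gmul_1r : forall x, gmul x gone = x;
  gmul_Vl : forall x, gmul (ginv x) x = gone;
  gmul_Vr : forall x, gmul x (ginv x) = gone
}.

Section Defs.
Context {G : Group}.

Fixpoint wprod (w : list G) : G :=
  match w with nil => gone G | s :: w' => gmul G s (wprod w') end.

Definition word_in (S : list G) (w : list G) : Prop := forall s, In s w -> In s S.

Definition symmetric (S : list G) : Prop := forall s, In s S -> In (ginv G s) S.

Definition generates (S : list G) : Prop :=
  forall g : G, exists w, word_in S w /\ wprod w = g.

Definition infinite_group : Prop := ~ exists l : list G, forall g : G, In g l.

(* d_S(g,h) = n in the right Cayley graph (edges {g, g s}):
   n is the least length of a word w over S with g * w = h *)
Definition dist_eq (S : list G) (g h : G) (n : nat) : Prop :=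
  (exists w, word_in S w /\ length w = n /\ gmul G g (wprod w) = h) /\
  (forall w, word_in S w -> gmul G g (wprod w) = h -> n <= length w).

Definition wlen_eq (S : list G) (t : G) (n : nat) : Prop := dist_eq S t (gone G) n.
End Defs.

(* Main.v *)
Require Import Defs.
From Stdlib Require Import Reals List.
From Stdlib Require Import Lia Lra Arith Bool ZArith Classical ClassicalEpsilon.
From Stdlib Require Cantor FinFun.
Import ListNotations.

Open Scope nat_scope.

Definition upd (b : nat -> bool) (n : nat) (c : bool) : nat -> bool :=
  fun i => if Nat.eqb i n then c else b i.

Fixpoint cnt (N : nat) (P : (nat -> bool) -> bool) : nat :=
  match N with
  | 0 => if P (fun _ => false) then 1 else 0
  | S n => cnt n (fun b => P (upd b n false)) + cnt n (fun b => P (upd b n true))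
  end.

Lemma cnt_ext N : forall P Q, (forall b, P b = Q b) -> cnt N P = cnt N Q.
Proof.
  induction N; intros P Q H; simpl.
  - rewrite H; auto.
  - f_equal; apply IHN; intros; apply H.
Qed.

Lemma cnt_true N : forall P, (forall b, P b = true) -> cnt N P = 2 ^ N.
Proof.
  induction N; intros P H; simpl.
  - rewrite H; auto.
  - rewrite !IHN; auto; lia.
Qed.

Lemma cnt_split N : forall P Q,
  cnt N P = cnt N (fun b => P b && Q b) + cnt N (fun b => P b && negb (Q b)).
Proof.
  induction N; intros P Q; simpl.
  - destruct (P _), (Q _); auto.
  - rewrite (IHN (fun b => P (upd b N false)) (fun b => Q (upd b N false))).
    rewrite (IHN (fun b => P (upd b N true)) (fun b => Q (upd b N true))). lia.
Qed.

Lemma cnt_mono N : forall P Q, (forall b, P b = true -> Q b = true) -> cnt N P <= cnt N Q.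
Proof.
  induction N; intros P Q H; simpl.
  - destruct (P (fun _ => false)) eqn:E; [rewrite (H _ E)|]; destruct (Q (fun _ => false)); lia.
  - specialize (IHN (fun b => P (upd b N false)) (fun b => Q (upd b N false))) as H1.
    specialize (IHN (fun b => P (upd b N true)) (fun b => Q (upd b N true))) as H2.
    simpl in *. assert (cnt N (fun b => P (upd b N false)) <= cnt N (fun b => Q (upd b N false))) by (apply H1; auto).
    assert (cnt N (fun b => P (upd b N true)) <= cnt N (fun b => Q (upd b N true))) by (apply H2; auto). lia.
Qed.

Lemma cnt_pos N : forall P, 0 < cnt N P -> exists b, P b = true.
Proof.
  induction N; intros P H; simpl in *.
  - destruct (P (fun _ => false)) eqn:E; [eauto|lia].
  - destruct (cnt N (fun b => P (upd b N false))) eqn:E.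
    + destruct (IHN (fun b => P (upd b N true))) as [b Hb]; [lia|eauto].
    + destruct (IHN (fun b => P (upd b N false))) as [b Hb]; [lia|eauto].
Qed.

Definition dep_on (V : list nat) (A : (nat -> bool) -> bool) :=
  forall b b', (forall i, In i V -> b i = b' i) -> A b = A b'.

Lemma dep_upd V A n c : dep_on V A -> dep_on V (fun b => A (upd b n c)).
Proof.
  intros H b b' Hb. apply H. intros i Hi. unfold upd. destruct (Nat.eqb i n); auto.
Qed.

Lemma dep_upd_out V A n c : dep_on V A -> ~ In n V -> forall b, A (upd b n c) = A b.
Proof.
  intros H Hn b. apply H. intros i Hi. unfold upd. destruct (Nat.eqb_spec i n); subst; tauto.
Qed.

Lemma cnt_indep N : forall VA VB A B, dep_on VA A -> dep_on VB B ->
  (forall i, In i VA -> ~ In i VB) ->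
  cnt N (fun b => A b && B b) * 2 ^ N = cnt N A * cnt N B.
Proof.
  induction N; intros VA VB A B HA HB Hd; simpl.
  - destruct (A (fun _ => false)), (B (fun _ => false)); simpl; lia.
  - destruct (in_dec Nat.eq_dec N VA) as [HN|HN].
    + assert (HBN : forall c b, B (upd b N c) = B b) by (intros; apply (dep_upd_out VB); auto).
      rewrite (cnt_ext N (fun b => A (upd b N false) && B (upd b N false)) (fun b => A (upd b N false) && B b))
        by (intros; rewrite HBN; auto).
      rewrite (cnt_ext N (fun b => A (upd b N true) && B (upd b N true)) (fun b => A (upd b N true) && B b))
        by (intros; rewrite HBN; auto).
      rewrite (cnt_ext N (fun b => B (upd b N false)) B) by auto.
      rewrite (cnt_ext N (fun b => B (upd b N true)) B) by auto.
      pose proof (IHN VA VB _ B (dep_upd VA A N false HA) HB Hd).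
      pose proof (IHN VA VB _ B (dep_upd VA A N true HA) HB Hd).
      nia.
    + assert (HAN : forall c b, A (upd b N c) = A b) by (intros; apply (dep_upd_out VA); auto).
      rewrite (cnt_ext N (fun b => A (upd b N false) && B (upd b N false)) (fun b => A b && B (upd b N false)))
        by (intros; rewrite HAN; auto).
      rewrite (cnt_ext N (fun b => A (upd b N true) && B (upd b N true)) (fun b => A b && B (upd b N true)))
        by (intros; rewrite HAN; auto).
      rewrite (cnt_ext N (fun b => A (upd b N false)) A) by auto.
      rewrite (cnt_ext N (fun b => A (upd b N true)) A) by auto.
      pose proof (IHN VA VB A _ HA (dep_upd VB B N false HB) Hd).
      pose proof (IHN VA VB A _ HA (dep_upd VB B N true HB) Hd).
      nia.
Qed.

Lemma cnt_zero N : forall P, (forall b, P b = false) -> cnt N P = 0.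
Proof.
  induction N; intros P H; simpl. rewrite H; auto. rewrite !IHN; auto.
Qed.

Open Scope nat_scope.

Lemma cnt_S_out V A n : dep_on V A -> ~ In n V -> cnt (S n) A = 2 * cnt n A.
Proof.
  intros H Hn. simpl.
  rewrite (cnt_ext n (fun b => A (upd b n false)) A) by (intros; apply (dep_upd_out V); auto).
  rewrite (cnt_ext n (fun b => A (upd b n true)) A) by (intros; apply (dep_upd_out V); auto). lia.
Qed.

Lemma cnt_lift V A n d : dep_on V A -> (forall i, In i V -> i < n) -> cnt (d + n) A = 2 ^ d * cnt n A.
Proof.
  intros H HV. induction d; [simpl; lia|].
  change (S d + n) with (S (d + n)).
  rewrite (cnt_S_out V); [rewrite IHd; simpl; lia| auto |].
  intro Hi; specialize (HV _ Hi); lia.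
Qed.

Definition peq (i j : nat) (b : nat -> bool) := Bool.eqb (b i) (b j).

Lemma peq_dep i j : dep_on [i; j] (peq i j).
Proof. intros b b' H; unfold peq; rewrite (H i), (H j); simpl; auto. Qed.

Lemma cnt_peq_lt i j N : i < j -> j < N -> cnt N (peq i j) * 2 = 2 ^ N.
Proof.
  intros Hij HjN.
  assert (Hb : cnt (S j) (peq i j) = 2 ^ j).
  { simpl.
    rewrite (cnt_ext j (fun b => peq i j (upd b j false)) (fun b => true && negb (b i))).
    2:{ intros b; unfold peq, upd. rewrite (proj2 (Nat.eqb_neq i j)) by lia. rewrite Nat.eqb_refl.
        destruct (b i); auto. }
    rewrite (cnt_ext j (fun b => peq i j (upd b j true)) (fun b => true && b i)).
    2:{ intros b; unfold peq, upd. rewrite (proj2 (Nat.eqb_neq i j)) by lia. rewrite Nat.eqb_refl.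
        destruct (b i); auto. }
    rewrite <- (cnt_true j (fun _ => true)) by auto.
    rewrite (cnt_split j (fun _ => true) (fun b => b i)). lia. }
  replace N with ((N - S j) + S j) by lia.
  rewrite (cnt_lift [i; j]); [| apply peq_dep | simpl; intros k [<-|[<-|[]]]; lia].
  rewrite Hb. rewrite (Nat.pow_add_r 2 (N - S j)), Nat.pow_succ_r'. lia.
Qed.

Lemma cnt_peq i j N : i <> j -> i < N -> j < N -> cnt N (peq i j) * 2 = 2 ^ N.
Proof.
  intros. destruct (Nat.lt_ge_cases i j). apply cnt_peq_lt; auto.
  rewrite (cnt_ext N _ (peq j i)). apply cnt_peq_lt; lia.
  intros; unfold peq; destruct (b i), (b j); auto.
Qed.

Definition pev (ps : list (nat * nat)) (b : nat -> bool) :=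
  forallb (fun p => peq (fst p) (snd p) b) ps.
Definition pvars (ps : list (nat * nat)) := flat_map (fun p => [fst p; snd p]) ps.

Lemma pev_dep ps : dep_on (pvars ps) (pev ps).
Proof.
  induction ps as [|[i j] ps IH]; intros b b' H; simpl; auto.
  unfold peq; simpl in *. rewrite (H i), (H j), (IH b b'); auto.
Qed.

Lemma cnt_pev ps N : NoDup (pvars ps) -> (forall i, In i (pvars ps) -> i < N) ->
  cnt N (pev ps) * 2 ^ length ps = 2 ^ N.
Proof.
  induction ps as [|[i j] ps IH]; intros Hn HN.
  - simpl. rewrite (cnt_true N); auto; lia.
  - simpl in Hn. inversion Hn as [|? ? Hi Hn1]; subst. inversion Hn1 as [|? ? Hj Hn2]; subst.
    assert (Hind := cnt_indep N [i;j] (pvars ps) (peq i j) (pev ps) (peq_dep i j) (pev_dep ps)).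
    rewrite (cnt_ext N (pev ((i, j) :: ps)) (fun b => peq i j b && pev ps b)) by (intros; reflexivity).
    assert (Hp : cnt N (peq i j) * 2 = 2 ^ N).
    { apply cnt_peq; [intro; subst; simpl in Hi; auto|apply HN; simpl; auto|apply HN; simpl; auto]. }
    assert (IH' := IH Hn2 (fun k Hk => HN k (or_intror (or_intror Hk)))).
    simpl length. rewrite Nat.pow_succ_r'.
    assert (Hd : forall k, In k [i; j] -> ~ In k (pvars ps)).
    { simpl; intros k [<-|[<-|[]]]; [intro; apply Hi; simpl; auto|exact Hj]. }
    specialize (Hind Hd).
    assert (0 < 2 ^ N) by (apply Nat.neq_0_lt_0, Nat.pow_nonzero; lia).
    (* cnt(E)*2^N = 2^(N-1) * cnt(rest), and 2^(N-1)*2 = 2^N *)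
    nia.
Qed.


Lemma INR_pow2 N : INR (2 ^ N) = (2 ^ N)%R.
Proof. rewrite pow_INR. f_equal. Qed.

Definition prodR (l : list R) : R := fold_right Rmult 1%R l.

Section LLL.
Variable ev : nat -> (nat -> bool) -> bool.
Variable vars : nat -> list nat.
Variables x p : nat -> R.
Hypothesis Hdep : forall n, dep_on (vars n) (ev n).
Hypothesis Hx : forall n, (0 <= x n < 1)%R.

Definition NT (T : list nat) (b : nat -> bool) := forallb (fun f => negb (ev f b)) T.

Lemma NT_dep T : dep_on (flat_map vars T) (NT T).
Proof.
  induction T as [|f T IH]; intros b b' H; simpl; auto.
  rewrite (Hdep f b b'), (IH b b'); auto.
  - intros i Hi; apply H; apply in_or_app; auto.
  - intros i Hi; apply H; apply in_or_app; auto.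
Qed.

Definition sharesb (e f : nat) : bool :=
  existsb (fun i => if in_dec Nat.eq_dec i (vars f) then true else false) (vars e).

Lemma sharesb_spec e f : sharesb e f = true <-> exists i, In i (vars e) /\ In i (vars f).
Proof.
  unfold sharesb; rewrite existsb_exists. split; intros [i [H1 H2]]; exists i; split; auto.
  - destruct (in_dec _ _ _); auto; discriminate.
  - destruct (in_dec _ _ _); auto.
Qed.

Lemma filter_part (f : nat -> bool) l : length (filter f l) + length (filter (fun a => negb (f a)) l) = length l.
Proof. induction l; simpl; auto. destruct (f a); simpl; lia. Qed.

Lemma cnt_NT_cons N F L :
  (INR (cnt N (NT (F :: L))) = INR (cnt N (NT L)) - INR (cnt N (fun b => ev F b && NT L b)))%R.
Proof.
  rewrite (cnt_split N (NT L) (ev F)).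
  rewrite (cnt_ext N (fun b => NT L b && ev F b) (fun b => ev F b && NT L b)) by (intros; apply andb_comm).
  rewrite (cnt_ext N (NT (F :: L)) (fun b => NT L b && negb (ev F b))) by (intros; simpl; apply andb_comm).
  rewrite plus_INR. ring.
Qed.

Lemma chain N T2 : forall L,
  (forall pre F L', pre ++ F :: L' = L ->
     (INR (cnt N (fun b => ev F b && NT (L' ++ T2) b)) <= x F * INR (cnt N (NT (L' ++ T2))))%R) ->
  (prodR (map (fun f => 1 - x f) L) * INR (cnt N (NT T2)) <= INR (cnt N (NT (L ++ T2))))%R.
Proof.
  induction L as [|F L IH]; intros H; simpl.
  - lra.
  - rewrite cnt_NT_cons.
    assert (H1 := H [] F L eq_refl).
    assert (H2 : (prodR (map (fun f => 1 - x f) L) * INR (cnt N (NT T2)) <= INR (cnt N (NT (L ++ T2))))%R).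
    { apply IH. intros pre F' L' E. apply (H (F :: pre)). simpl; rewrite E; auto. }
    destruct (Hx F).
    assert (0 <= 1 - x F)%R by lra.
    assert ((1 - x F) * (prodR (map (fun f => 1 - x f) L) * INR (cnt N (NT T2)))
            <= (1 - x F) * INR (cnt N (NT (L ++ T2))))%R by (apply Rmult_le_compat_l; auto).
    lra.
Qed.

Hypothesis Hp : forall n N, (forall i, In i (vars n) -> i < N) ->
  (INR (cnt N (ev n)) <= p n * 2 ^ N)%R.
Hypothesis Hl : forall n L, NoDup L ->
  (forall f, In f L -> f <> n /\ exists i, In i (vars n) /\ In i (vars f)) ->
  (p n <= x n * prodR (map (fun f => 1 - x f) L))%R.

Lemma NT_perm T T' : (forall f, In f T <-> In f T') -> forall b, NT T b = NT T' b.
Proof.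
  intros H b. unfold NT. destruct (forallb _ T) eqn:E1, (forallb _ T') eqn:E2; auto.
  - rewrite forallb_forall in E1. rewrite <- E2. symmetry. apply forallb_forall.
    intros f Hf. apply E1, H; auto.
  - rewrite forallb_forall in E2. rewrite <- E1. apply forallb_forall.
    intros f Hf. apply E2, H; auto.
Qed.

Lemma prodR_nonneg L : (0 <= prodR (map (fun f => 1 - x f) L))%R.
Proof.
  induction L; simpl; [lra|]. destruct (Hx a). apply Rmult_le_pos; lra.
Qed.

Lemma lll_claim N : forall n T e, length T <= n -> NoDup T -> ~ In e T ->
  (forall f, In f (e :: T) -> forall i, In i (vars f) -> i < N) ->
  (INR (cnt N (fun b => ev e b && NT T b)) <= x e * INR (cnt N (NT T)))%R.
Proof.
  induction n as [n IHn] using lt_wf_ind.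
  intros T e Hlen Hnd He Hbd.
  set (T1 := filter (sharesb e) T).
  set (T2 := filter (fun a => negb (sharesb e a)) T).
  assert (Hpart := filter_part (sharesb e) T). fold T1 T2 in Hpart.
  assert (HT1 : forall f, In f T1 <-> In f T /\ sharesb e f = true) by (intro; apply filter_In).
  assert (HT2 : forall f, In f T2 <-> In f T /\ negb (sharesb e f) = true) by (intro; apply filter_In).
  assert (Ha : cnt N (fun b => ev e b && NT T b) <= cnt N (fun b => ev e b && NT T2 b)).
  { apply cnt_mono. intros b Hb. apply andb_true_iff in Hb as [Hb1 Hb2].
    rewrite Hb1; simpl. unfold NT in *. rewrite forallb_forall in *.
    intros f Hf. apply Hb2. apply HT2; auto. }
  assert (Hb : cnt N (fun b => ev e b && NT T2 b) * 2 ^ N = cnt N (ev e) * cnt N (NT T2)).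
  { apply (cnt_indep N (vars e) (flat_map vars T2)); auto. apply NT_dep.
    intros i Hi Hi2. apply in_flat_map in Hi2 as [f [Hf Hif]].
    apply HT2 in Hf as [_ Hf]. apply negb_true_iff in Hf.
    assert (sharesb e f = true) by (apply sharesb_spec; eauto). congruence. }
  assert (Hpe := Hp e N (Hbd e (or_introl eq_refl))).
  assert (Hle := Hl e T1 (NoDup_filter _ Hnd)).
  assert (Hle' : (p e <= x e * prodR (map (fun f => 1 - x f) T1))%R).
  { apply Hle. intros f Hf. apply HT1 in Hf as [Hf Hs]. split.
    - intro; subst; auto.
    - apply sharesb_spec; auto. }
  assert (Hc : (prodR (map (fun f => 1 - x f) T1) * INR (cnt N (NT T2)) <= INR (cnt N (NT (T1 ++ T2))))%R).
  { apply chain. intros pre F L' E.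
    assert (HF : In F T1) by (rewrite <- E; apply in_or_app; simpl; auto).
    apply (IHn (length (L' ++ T2))).
    - rewrite length_app. assert (length T1 = length pre + S (length L')) by (rewrite <- E, length_app; simpl; lia).
      lia.
    - lia.
    - apply NoDup_app.
      + assert (NoDup T1) by (apply NoDup_filter; auto). rewrite <- E in H.
        apply NoDup_app_remove_l in H. inversion H; auto.
      + apply NoDup_filter; auto.
      + intros a Ha1 Ha2. apply HT2 in Ha2 as [_ Ha2].
        assert (In a T1) by (rewrite <- E; apply in_or_app; simpl; auto).
        apply HT1 in H as [_ H]. rewrite H in Ha2; discriminate.
    - intro HF2. apply in_app_or in HF2 as [HF2|HF2].
      + assert (NoDup T1) by (apply NoDup_filter; auto). rewrite <- E in H.
        apply NoDup_app_remove_l in H. inversion H; auto.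
      + apply HT2 in HF2 as [_ HF2]. apply HT1 in HF as [_ HF]. rewrite HF in HF2; discriminate.
    - intros f [Hf0|Hf] i Hi; (eapply Hbd; [|exact Hi]).
      + subst f. right. apply HT1; auto.
      + apply in_app_or in Hf as [Hf|Hf].
        * right. apply HT1. rewrite <- E. apply in_or_app; simpl; auto.
        * right. apply HT2; auto. }
  rewrite (cnt_ext N (NT (T1 ++ T2)) (NT T)) in Hc.
  2:{ apply NT_perm. intros f; rewrite in_app_iff, HT1, HT2. split.
      - intros [[? ?]|[? ?]]; auto.
      - intros Hf; destruct (sharesb e f); auto. }
  assert (H2N : (0 < 2 ^ N)%R) by (apply pow_lt; lra).
  apply le_INR in Ha.
  assert (Hb' : (INR (cnt N (fun b => ev e b && NT T2 b)) * 2 ^ N = INR (cnt N (ev e)) * INR (cnt N (NT T2)))%R).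
  { rewrite <- INR_pow2. rewrite <- !mult_INR. f_equal. exact Hb. }
  destruct (Hx e).
  assert (Hpos := prodR_nonneg T1).
  assert (INR (cnt N (ev e)) * INR (cnt N (NT T2)) <= (p e * 2 ^ N) * INR (cnt N (NT T2)))%R
    by (apply Rmult_le_compat_r; auto using pos_INR).
  assert (p e * 2 ^ N * INR (cnt N (NT T2)) <= x e * prodR (map (fun f => 1 - x f) T1) * 2 ^ N * INR (cnt N (NT T2)))%R.
  { apply Rmult_le_compat_r; [apply pos_INR|]. apply Rmult_le_compat_r; lra. }
  assert (x e * (prodR (map (fun f => 1 - x f) T1) * INR (cnt N (NT T2))) <= x e * INR (cnt N (NT T)))%R
    by (apply Rmult_le_compat_l; auto).
  apply Rmult_le_reg_r with (2 ^ N)%R; auto. nra.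
Qed.

Lemma lll_pos N : forall T, NoDup T -> (forall f, In f T -> forall i, In i (vars f) -> i < N) ->
  (prodR (map (fun f => 1 - x f) T) * 2 ^ N <= INR (cnt N (NT T)))%R.
Proof.
  induction T as [|e T IH]; intros Hnd Hbd; simpl.
  - rewrite (cnt_true N) by auto. rewrite INR_pow2. lra.
  - inversion Hnd as [|? ? Hni Hnd']; subst.
    rewrite cnt_NT_cons.
    assert (H1 := lll_claim N (length T) T e (le_n _) Hnd' Hni Hbd).
    assert (H3 := IH Hnd' (fun f Hf => Hbd f (or_intror Hf))).
    destruct (Hx e).
    assert ((1 - x e) * (prodR (map (fun f => 1 - x f) T) * 2 ^ N) <= (1 - x e) * INR (cnt N (NT T)))%R
      by (apply Rmult_le_compat_l; lra).
    lra.
Qed.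

Lemma prodR_pos L : (0 < prodR (map (fun f => 1 - x f) L))%R.
Proof.
  induction L; simpl; [lra|]. destruct (Hx a). apply Rmult_lt_0_compat; lra.
Qed.

Lemma lll_finite T : NoDup T -> exists b, NT T b = true.
Proof.
  intros Hnd.
  set (N := S (fold_right Nat.max 0 (flat_map vars T))).
  assert (Hbd : forall f, In f T -> forall i, In i (vars f) -> i < N).
  { intros f Hf i Hi. unfold N.
    assert (In i (flat_map vars T)) by (apply in_flat_map; eauto).
    clear Hf Hi Hnd. induction (flat_map vars T); simpl in *; [tauto|].
    destruct H as [<-|H]; [lia|]. specialize (IHl H). lia. }
  assert (H := lll_pos N T Hnd Hbd).
  assert (0 < prodR (map (fun f => 1 - x f) T) * 2 ^ N)%R
    by (apply Rmult_lt_0_compat; [apply prodR_pos|apply pow_lt; lra]).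
  apply cnt_pos with N. apply INR_lt. change (INR 0) with 0%R. lra.
Qed.
End LLL.


Section Compact.
Variable ev : nat -> (nat -> bool) -> bool.
Variable vars : nat -> list nat.
Hypothesis Hdep : forall n, dep_on (vars n) (ev n).
Hypothesis Hfin : forall n, exists b, forall k, k <= n -> ev k b = false.

Definition good (pf : list bool) : Prop :=
  forall n, exists b, (forall i, i < length pf -> b i = nth i pf false) /\ forall k, k <= n -> ev k b = false.

Lemma good_nil : good [].
Proof. intros n. destruct (Hfin n) as [b Hb]. exists b; split; auto. simpl; intros; lia. Qed.

Lemma good_ext pf : good pf -> good (pf ++ [false]) \/ good (pf ++ [true]).
Proof.
  intros H. apply NNPP. intro Hn. apply not_or_and in Hn as [H0 H1].
  apply not_all_ex_not in H0 as [n0 H0]. apply not_all_ex_not in H1 as [n1 H1].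
  destruct (H (Nat.max n0 n1)) as [b [Hb1 Hb2]].
  assert (Hagree : forall c, b (length pf) = c -> forall i, i < length (pf ++ [c]) -> b i = nth i (pf ++ [c]) false).
  { intros c Hc i Hi. rewrite length_app in Hi; simpl in Hi.
    destruct (Nat.lt_ge_cases i (length pf)).
    - rewrite app_nth1; auto.
    - assert (i = length pf) by lia. subst. rewrite app_nth2; auto. rewrite Nat.sub_diag; auto. }
  destruct (b (length pf)) eqn:E.
  - apply H1. exists b. split; [apply Hagree; auto|]. intros; apply Hb2; lia.
  - apply H0. exists b. split; [apply Hagree; auto|]. intros; apply Hb2; lia.
Qed.

Definition choose_bit (pf : list bool) : bool :=
  if excluded_middle_informative (good (pf ++ [false])) then false else true.

Fixpoint pref (n : nat) : list bool :=
  match n with 0 => [] | S n => pref n ++ [choose_bit (pref n)] end.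

Lemma pref_good n : good (pref n).
Proof.
  induction n; simpl; [apply good_nil|]. unfold choose_bit.
  destruct (excluded_middle_informative _); auto.
  destruct (good_ext _ IHn); tauto.
Qed.

Lemma pref_len n : length (pref n) = n.
Proof. induction n; simpl; auto. rewrite length_app; simpl; lia. Qed.

Lemma pref_nth i n m : i < n -> n <= m -> nth i (pref n) false = nth i (pref m) false.
Proof.
  intros Hi Hm. induction Hm; auto. rewrite IHHm. simpl. rewrite app_nth1; auto.
  rewrite pref_len; lia.
Qed.

Lemma compactness : exists b, forall k, ev k b = false.
Proof.
  exists (fun i => nth i (pref (S i)) false). intros k.
  set (M := S (fold_right Nat.max 0 (vars k))).
  destruct (pref_good M k) as [b' [Hb1 Hb2]].
  rewrite (Hdep k _ b'); [apply Hb2; auto|]. intros i Hi.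
  assert (HiM : i < M).
  { unfold M. clear -Hi. induction (vars k); simpl in *; [tauto|].
    destruct Hi as [<-|H]; [lia|]. specialize (IHl H). lia. }
  rewrite Hb1 by (rewrite pref_len; auto).
  destruct (Nat.le_gt_cases M (S i)).
  - symmetry; apply pref_nth; auto.
  - apply pref_nth; lia.
Qed.
End Compact.

Theorem lll_inf (ev : nat -> (nat -> bool) -> bool) (vars : nat -> list nat) (x p : nat -> R) :
  (forall n, dep_on (vars n) (ev n)) ->
  (forall n, (0 <= x n < 1)%R) ->
  (forall n N, (forall i, In i (vars n) -> i < N) -> (INR (cnt N (ev n)) <= p n * 2 ^ N)%R) ->
  (forall n L, NoDup L ->
    (forall f, In f L -> f <> n /\ exists i, In i (vars n) /\ In i (vars f)) ->
    (p n <= x n * prodR (map (fun f => 1 - x f) L))%R) ->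
  exists b, forall k, ev k b = false.
Proof.
  intros Hdep Hx Hp Hl. apply (compactness ev vars Hdep).
  intros n. destruct (lll_finite ev vars x p Hdep Hx Hp Hl (seq 0 (S n)) (seq_NoDup _ _)) as [b Hb].
  exists b. intros k Hk. unfold NT in Hb. rewrite forallb_forall in Hb.
  assert (negb (ev k b) = true) by (apply Hb; apply in_seq; lia).
  destruct (ev k b); auto.
Qed.

Open Scope R_scope.

Lemma exp_le (a b : R) : a <= b -> exp a <= exp b.
Proof. intros [H|H]; [left; apply exp_increasing; auto|subst; lra]. Qed.

Lemma exp_bound y : 0 <= y <= 1/2 -> exp (-2 * y) <= 1 - y.
Proof.
  intros Hy. assert (H1 := exp_ineq1_le (2 * y)).
  assert (H2 : 1 <= (1 - y) * exp (2 * y)).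
  { assert (0 <= 1 - y) by lra.
    assert ((1 - y) * (1 + 2 * y) <= (1 - y) * exp (2 * y)) by (apply Rmult_le_compat_l; lra).
    nra. }
  replace (-2 * y) with (- (2 * y)) by ring. rewrite exp_Ropp.
  assert (0 < exp (2 * y)) by apply exp_pos.
  apply Rmult_le_reg_r with (exp (2 * y)); auto. rewrite Rinv_l by lra. lra.
Qed.

Definition sumR (l : list R) : R := fold_right Rplus 0 l.

Lemma prodR_exp {A} (x : A -> R) L : (forall f, In f L -> 0 <= x f <= 1/2) ->
  exp (-2 * sumR (map x L)) <= prodR (map (fun f => 1 - x f) L).
Proof.
  induction L as [|a L IH]; intros H; simpl.
  - rewrite Rmult_0_r, exp_0. lra.
  - rewrite Rmult_plus_distr_l, exp_plus.
    assert (H1 := exp_bound (x a) (H a (or_introl eq_refl))).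
    assert (H2 := IH (fun f Hf => H f (or_intror Hf))).
    apply Rmult_le_compat; auto; left; apply exp_pos.
Qed.

Lemma exp_half : 1/2 <= exp (-(1/2)).
Proof.
  rewrite exp_Ropp. assert (H := exp_le_3).
  assert (He : exp 1 = exp (1/2) * exp (1/2)) by (rewrite <- exp_plus; f_equal; lra).
  assert (0 < exp (1/2)) by apply exp_pos.
  assert (exp (1/2) <= 2) by nra.
  apply Rmult_le_reg_r with (exp (1/2)); auto. rewrite Rinv_l by lra. lra.
Qed.

Lemma half_pow_exp j : (1/2) ^ j <= exp (- INR j / 2).
Proof.
  induction j.
  - simpl. replace (- 0 / 2) with 0 by lra. rewrite exp_0; lra.
  - rewrite S_INR. replace (- (INR j + 1) / 2) with (- INR j / 2 + - (1/2)) by lra.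
    rewrite exp_plus. simpl. rewrite Rmult_comm.
    apply Rmult_le_compat; auto using exp_half; [apply pow_le; lra|lra].
Qed.

Lemma half_pow_pos n : 0 < (1/2) ^ n.
Proof. apply pow_lt; lra. Qed.

Lemma pow_le1' x n : 0 <= x <= 1 -> x ^ n <= 1.
Proof. intros H; induction n; simpl; [lra|]. assert (0 <= x ^ n) by (apply pow_le; lra). nra. Qed.

Lemma half_pow_le a b : (a <= b)%nat -> (1/2) ^ b <= (1/2) ^ a.
Proof.
  intros H. replace b with (a + (b - a))%nat by lia. rewrite pow_add.
  assert (0 < (1/2)^a) by apply half_pow_pos.
  assert ((1/2) ^ (b - a) <= 1) by (apply pow_le1'; lra).
  assert (0 <= (1/2)^(b-a)) by (apply pow_le; lra). nra.
Qed.

Lemma half_pow_inv a s t : (a * 2 ^ s <= 2 ^ t)%nat -> INR a * (1/2) ^ t <= (1/2) ^ s.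
Proof.
  intros H. apply le_INR in H. rewrite mult_INR, !INR_pow2 in H.
  assert (E : forall n, (1/2) ^ n * 2 ^ n = 1).
  { intros n. rewrite <- Rpow_mult_distr. replace (1/2 * 2) with 1 by lra. apply pow1. }
  assert (0 < 2 ^ t) by (apply pow_lt; lra). assert (0 < 2 ^ s) by (apply pow_lt; lra).
  assert (Hs := E s). assert (Ht := E t).
  assert (0 < (1/2)^t) by apply half_pow_pos. assert (0 < (1/2)^s) by apply half_pow_pos.
  apply Rmult_le_reg_r with (2 ^ s); auto. rewrite Hs.
  apply Rmult_le_reg_r with (2 ^ t); auto.
  replace (INR a * (1/2)^t * 2^s * 2^t) with ((INR a * 2 ^ s) * ((1/2)^t * 2^t)) by ring.
  rewrite Ht. lra.
Qed.

Lemma geom s K : sumR (map (fun k => (1/2) ^ k) (seq s K)) <= 2 * (1/2) ^ s.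
Proof.
  revert s. induction K; intros s; simpl.
  - assert (0 < (1/2)^s) by apply half_pow_pos. lra.
  - specialize (IHK (S s)). simpl in IHK. lra.
Qed.

Lemma geom5 K : sumR (map (fun k => (1/2) ^ (k + 5)) (seq 1 K)) <= 1/32.
Proof.
  assert (E : map (fun k => (1/2) ^ (k + 5)) (seq 1 K) = map (fun r => (1/32) * r) (map (fun k => (1/2)^k) (seq 1 K))).
  { rewrite map_map. apply map_ext. intros a. rewrite pow_add. replace ((1/2)^5) with (1/32) by (simpl; field). ring. }
  rewrite E. clear E. assert (H := geom 1 K). simpl in H.
  assert (Hs : forall l, sumR (map (fun r => 1/32 * r) l) = 1/32 * sumR l).
  { induction l; simpl; [ring|rewrite IHl; ring]. }
  rewrite Hs. lra.
Qed.

Local Open Scope Z_scope.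
Lemma zbig : forall z : Z, (40 <= z)%Z -> (442368 * (z + 1) ^ 3 <= 2 ^ z)%Z.
Proof.
  intros z Hz. pattern z. apply Z.le_ind with (n := 40%Z); auto.
  - intros a b E; subst; tauto.
  - vm_compute. discriminate.
  - intros m Hm IH. rewrite Z.pow_succ_r by lia. unfold Z.succ.
    assert (H : (m + 1 + 1) ^ 3 <= 2 * (m + 1) ^ 3).
    { assert (H3 : forall a, (a + 1) ^ 3 = a*a*a + 3*a*a+3*a+1) by (intros; ring).
      rewrite (H3 (m+1)), (H3 m). nia. }
    revert IH H. generalize (2 ^ m) ((m+1)^3) ((m+1+1)^3). intros. lia.
Qed.


Lemma zkey (b k : Z) : 1 <= k -> 1000 * k <= b ->
  b ^ 3 * 2 ^ (k + 5) <= 2 ^ (b / 12).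
Proof.
  intros Hk Hb.
  assert (H2 := Z.div_mod b 24 ltac:(lia)). assert (H := Z.mod_pos_bound b 24 ltac:(lia)).
  set (z := b / 24) in *.
  assert (H2' := Z.div_mod b 12 ltac:(lia)). assert (H' := Z.mod_pos_bound b 12 ltac:(lia)).
  set (y := b / 12) in *.
  assert (Hz40 : 40 <= z) by lia.
  assert (H12 : 2 * z <= y) by lia.
  assert (H1 : b ^ 3 <= 13824 * (z + 1) ^ 3).
  { replace 13824 with (24 ^ 3) by reflexivity. rewrite <- Z.pow_mul_l.
    apply Z.pow_le_mono_l. lia. }
  assert (H3 : 2 ^ (k + 5) <= 32 * 2 ^ z).
  { rewrite Z.pow_add_r by lia. rewrite Z.mul_comm. apply Z.mul_le_mono_nonneg_l; [lia|].
    apply Z.pow_le_mono_r; lia. }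
  assert (H4 := zbig z Hz40).
  assert (H5 : 2 ^ (z + z) <= 2 ^ y) by (apply Z.pow_le_mono_r; lia).
  rewrite Z.pow_add_r in H5 by lia.
  assert (0 <= b ^ 3) by (apply Z.pow_nonneg; lia).
  assert (0 < 2 ^ (k + 5)) by (apply Z.pow_pos_nonneg; lia).
  assert (0 < 2 ^ z) by (apply Z.pow_pos_nonneg; lia).
  assert (0 <= (z+1) ^ 3) by (apply Z.pow_nonneg; lia).
  apply Z.le_trans with (13824 * (z + 1) ^ 3 * 2 ^ (k + 5)).
  { apply Z.mul_le_mono_nonneg_r; lia. }
  apply Z.le_trans with (13824 * (z + 1) ^ 3 * (32 * 2 ^ z)).
  { apply Z.mul_le_mono_nonneg_l; lia. }
  apply Z.le_trans with (2 ^ z * 2 ^ z); auto.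
  replace (13824 * (z + 1) ^ 3 * (32 * 2 ^ z)) with ((442368 * (z + 1) ^ 3) * 2 ^ z) by ring.
  apply Z.mul_le_mono_nonneg_r; lia.
Qed.
Local Close Scope Z_scope.

Lemma nat_key beta k : (1 <= k)%nat -> (1000 * k <= beta)%nat ->
  (beta ^ 3 * 2 ^ (k + 5) <= 2 ^ (beta / 12))%nat.
Proof.
  intros Hk Hb. apply Nat2Z.inj_le. rewrite Nat2Z.inj_mul, !Nat2Z.inj_pow, Nat2Z.inj_add, Nat2Z.inj_div.
  apply zkey; lia.
Qed.

Open Scope nat_scope.

Definition ceq {T : Type} (a b : T) : {a = b} + {a <> b} := excluded_middle_informative (a = b).

Lemma NoDup_rem {T} (a : T) l : NoDup l -> NoDup (remove ceq a l).
Proof.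
  induction l as [|b l IH]; intros Hn; simpl; auto. inversion Hn; subst.
  destruct (ceq a b); auto. constructor; auto. intro H; apply in_remove in H; tauto.
Qed.

Lemma length_rem {T} (a : T) l : NoDup l -> length l <= S (length (remove ceq a l)).
Proof.
  induction l as [|b l IH]; intros Hn; simpl; [lia|]. inversion Hn; subst.
  destruct (ceq a b) as [E|E]; simpl.
  - subst. rewrite notin_remove; auto.
  - specialize (IH H2); lia.
Qed.

Lemma sumR_remove {T} (w : T -> R) a l : NoDup l -> In a l ->
  sumR (map w l) = (w a + sumR (map w (remove ceq a l)))%R.
Proof.
  induction l as [|b l IH]; intros Hn Ha; simpl in *; [tauto|].
  inversion Hn; subst. destruct (ceq a b) as [E|E].
  - subst. rewrite notin_remove; auto.
  - destruct Ha as [Ha|Ha]; [congruence|]. simpl. rewrite IH; auto. ring.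
Qed.

Lemma sumR_nonneg {T} (w : T -> R) l : (forall q, 0 <= w q)%R -> (0 <= sumR (map w l))%R.
Proof. intros H; induction l; simpl; [lra|]. specialize (H a). lra. Qed.

Lemma sum_incl {T} (w : T -> R) : (forall q, 0 <= w q)%R -> forall M l, NoDup l -> incl l M ->
  (sumR (map w l) <= sumR (map w M))%R.
Proof.
  intros Hw M. induction M as [|a M IH]; intros l Hn Hi.
  - destruct l; simpl; [lra|]. exfalso; apply (Hi t); simpl; auto.
  - simpl. destruct (in_dec ceq a l) as [Ha|Ha].
    + rewrite (sumR_remove w a l Hn Ha). apply Rplus_le_compat_l. apply IH.
      * apply NoDup_rem; auto.
      * intros y Hy. apply in_remove in Hy as [Hy1 Hy2]. destruct (Hi y Hy1); auto. congruence.
    + assert (incl l M). { intros y Hy. destruct (Hi y Hy); auto. subst; tauto. }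
      specialize (IH l Hn H). specialize (Hw a). lra.
Qed.

Lemma sum_le_map {T U} (x : T -> R) (w : U -> R) (phi : T -> U) l :
  (forall f, In f l -> x f <= w (phi f))%R -> (sumR (map x l) <= sumR (map w (map phi l)))%R.
Proof.
  induction l; intros H; simpl; [lra|].
  assert (x a <= w (phi a))%R by (apply H; simpl; auto).
  assert (sumR (map x l) <= sumR (map w (map phi l)))%R by (apply IHl; intros; apply H; simpl; auto).
  lra.
Qed.

Lemma NoDup_map_in {T U} (f : T -> U) l : (forall a b, In a l -> In b l -> f a = f b -> a = b) ->
  NoDup l -> NoDup (map f l).
Proof.
  induction l as [|a l IH]; intros Hi Hn; simpl; constructor; inversion Hn; subst.
  - intro H. apply in_map_iff in H as [b [E Hb]]. assert (b = a) by (apply Hi; simpl; auto).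
    subst; tauto.
  - apply IH; auto. intros; apply Hi; simpl; auto.
Qed.

Lemma min_ex (P : nat -> Prop) : (exists n, P n) -> exists n, P n /\ forall m, P m -> n <= m.
Proof.
  intros [n Hn]. induction n as [n IH] using lt_wf_ind.
  destruct (classic (exists m, m < n /\ P m)) as [[m [Hm1 Hm2]]|H].
  - apply (IH m); auto.
  - exists n; split; auto. intros m Hm. destruct (Nat.lt_ge_cases m n); auto.
    exfalso; apply H; eauto.
Qed.

Section GroupPart.
Context {G : Group}.
Variable Sg : list G.
Hypothesis Hinf : @infinite_group G.
Hypothesis Hsym : symmetric Sg.
Hypothesis Hgen : generates Sg.

Local Notation "x ** y" := (gmul G x y) (at level 40, left associativity).
Local Notation one := (gone G).
Local Notation inv := (ginv G).

Lemma mul_inv_l x y : inv x ** (x ** y) = y.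
Proof. rewrite gmul_assoc, gmul_Vl, gmul_1l; auto. Qed.
Lemma mul_inv_r x y : x ** (inv x ** y) = y.
Proof. rewrite gmul_assoc, gmul_Vr, gmul_1l; auto. Qed.
Lemma mul_cancel_l x y z : x ** y = x ** z -> y = z.
Proof. intros H. rewrite <- (mul_inv_l x y), <- (mul_inv_l x z), H; auto. Qed.
Lemma inv_unique x y : x ** y = one -> y = inv x.
Proof. intros H. apply (mul_cancel_l x). rewrite H, gmul_Vr; auto. Qed.
Lemma inv_mul x y : inv (x ** y) = inv y ** inv x.
Proof.
  symmetry. apply inv_unique. rewrite <- gmul_assoc, (gmul_assoc _ y), gmul_Vr, gmul_1l, gmul_Vr; auto.
Qed.
Lemma mul_inv_rr x y : x ** y ** inv y = x.
Proof. rewrite <- gmul_assoc, gmul_Vr, gmul_1r; auto. Qed.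

Lemma word_in_cons s w : word_in Sg (s :: w) <-> In s Sg /\ word_in Sg w.
Proof.
  unfold word_in; simpl; split.
  - intros H; split; auto.
  - intros [H1 H2] a [<-|Ha]; auto.
Qed.

Lemma word_in_app u v : word_in Sg (u ++ v) <-> word_in Sg u /\ word_in Sg v.
Proof.
  unfold word_in; split.
  - intros H; split; intros s Hs; apply H, in_or_app; auto.
  - intros [H1 H2] s Hs; apply in_app_or in Hs as [Hs|Hs]; auto.
Qed.

Lemma wprod_app (u v : list G) : wprod (u ++ v) = wprod u ** wprod v.
Proof. induction u; simpl. rewrite gmul_1l; auto. rewrite IHu, gmul_assoc; auto. Qed.

Fixpoint wle (n : nat) : list (list G) :=
  match n with 0 => [[]] | S n' => [] :: flat_map (fun s => map (cons s) (wle n')) Sg end.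

Lemma in_wle n : forall w, In w (wle n) <-> word_in Sg w /\ length w <= n.
Proof.
  induction n; intros w; simpl.
  - split. intros [<-|[]]; split; [intros s []|simpl; lia].
    intros [_ H]; destruct w; simpl in *; auto; lia.
  - rewrite in_flat_map. split.
    + intros [<-|[s [Hs Hw]]]. split; [intros a []|simpl; lia].
      apply in_map_iff in Hw as [w' [<- Hw']]. apply IHn in Hw' as [H1 H2].
      split; [apply word_in_cons; auto|simpl; lia].
    + intros [H1 H2]. destruct w as [|s w]; auto. right.
      apply word_in_cons in H1 as [H1 H3]. exists s; split; auto.
      apply in_map. apply IHn; simpl in H2; split; auto; lia.
Qed.

Definition Ball (n : nat) : list G := nodup ceq (map (@wprod G) (wle n)).
Definition bs (n : nat) : nat := length (Ball n).

Lemma in_Ball n x : In x (Ball n) <-> exists w, word_in Sg w /\ length w <= n /\ wprod w = x.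
Proof.
  unfold Ball. rewrite nodup_In, in_map_iff. split.
  - intros [w [<- Hw]]. apply in_wle in Hw as [H1 H2]. eauto.
  - intros [w [H1 [H2 <-]]]. exists w; split; auto. apply in_wle; auto.
Qed.

Lemma Ball_nd n : NoDup (Ball n).
Proof. apply NoDup_nodup. Qed.

Lemma Ball_mono r s : r <= s -> incl (Ball r) (Ball s).
Proof.
  intros H x Hx. apply in_Ball in Hx as [w [H1 [H2 H3]]]. apply in_Ball. exists w; repeat split; auto; lia.
Qed.

Lemma bs_mono r s : r <= s -> bs r <= bs s.
Proof. intros H. apply NoDup_incl_length; [apply Ball_nd|apply Ball_mono; auto]. Qed.

Lemma Ball_mul r s u v : In u (Ball r) -> In v (Ball s) -> In (u ** v) (Ball (r + s)).
Proof.
  intros Hu Hv. apply in_Ball in Hu as [w1 [A1 [B1 <-]]]. apply in_Ball in Hv as [w2 [A2 [B2 <-]]].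
  apply in_Ball. exists (w1 ++ w2). rewrite word_in_app, length_app, wprod_app. repeat split; auto; lia.
Qed.

Lemma Ball_split r s x : In x (Ball (r + s)) -> exists u v, In u (Ball r) /\ In v (Ball s) /\ x = u ** v.
Proof.
  intros Hx. apply in_Ball in Hx as [w [A [B <-]]].
  rewrite <- (firstn_skipn r w) in A |- *. apply word_in_app in A as [A1 A2].
  exists (wprod (firstn r w)), (wprod (skipn r w)). rewrite wprod_app. repeat split; auto.
  - apply in_Ball. exists (firstn r w). repeat split; auto. rewrite length_firstn; lia.
  - apply in_Ball. exists (skipn r w). repeat split; auto. rewrite length_skipn; lia.
Qed.

Lemma bs_add r s : bs (r + s) <= bs r * bs s.
Proof.
  unfold bs. rewrite <- length_prod, <- (length_map (fun p => fst p ** snd p)).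
  apply NoDup_incl_length; [apply Ball_nd|].
  intros x Hx. apply Ball_split in Hx as [u [v [Hu [Hv ->]]]].
  apply in_map_iff. exists (u, v); split; auto. apply in_prod; auto.
Qed.

Lemma one_Ball n : In one (Ball n).
Proof. apply in_Ball. exists []; repeat split; simpl; auto; [intros s []|lia]. Qed.

Lemma Ball_all n : incl (Ball (S n)) (Ball n) -> forall g : G, In g (Ball n).
Proof.
  intros H.
  assert (Hm : forall m, incl (Ball m) (Ball n)).
  { induction m.
    - apply Ball_mono; lia.
    - intros x Hx. apply in_Ball in Hx as [w [A [B <-]]].
      destruct w as [|s w]. apply one_Ball.
      apply word_in_cons in A as [A1 A2].
      assert (Hw : In (wprod w) (Ball n)) by (apply IHm, in_Ball; exists w; simpl in B; repeat split; auto; lia).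
      apply in_Ball in Hw as [u [C [D E]]].
      apply H. apply in_Ball. exists (s :: u). simpl. rewrite E. repeat split; auto; [apply word_in_cons; auto|lia]. }
  intros g. destruct (Hgen g) as [w [A B]]. apply (Hm (length w)). apply in_Ball. exists w; repeat split; auto.
Qed.

Lemma bs_grow n : S n <= bs n.
Proof.
  induction n.
  - unfold bs. destruct (Ball 0) eqn:E; simpl; [|lia]. assert (H := one_Ball 0). rewrite E in H; destruct H.
  - assert (Hx : exists x, In x (Ball (S n)) /\ ~ In x (Ball n)).
    { apply NNPP. intro H. apply Hinf. exists (Ball n). apply Ball_all.
      intros x Hx. apply NNPP. intro Hn. apply H. eauto. }
    destruct Hx as [x [H1 H2]].
    assert (length (x :: Ball n) <= bs (S n)).
    { apply NoDup_incl_length. constructor; auto; apply Ball_nd.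
      intros y [<-|Hy]; auto. apply Ball_mono with n; auto. }
    simpl in H. unfold bs in *. lia.
Qed.

Definition glen (c : G) (k : nat) : Prop := dist_eq Sg one c k.

Lemma glen_ex c : exists k, glen c k.
Proof.
  assert (Hex : exists n, exists w, word_in Sg w /\ length w = n /\ one ** wprod w = c).
  { destruct (Hgen c) as [w [A B]]. exists (length w), w. rewrite gmul_1l; auto. }
  destruct (min_ex _ Hex) as [n [[w [A [B C]]] D]].
  exists n. split; [eauto|intros w' H1 H2; apply D; eauto].
Qed.

Lemma glen_unique c k k' : glen c k -> glen c k' -> k = k'.
Proof.
  intros [[w [A [B C]]] D] [[w' [A' [B' C']]] D'].
  assert (k <= length w') by (apply D; auto). assert (k' <= length w) by (apply D'; auto). lia.
Qed.

Lemma dist_glen g h k : dist_eq Sg g h k -> glen (inv g ** h) k.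
Proof.
  intros [[w [A [B C]]] D]. split.
  - exists w. repeat split; auto. rewrite gmul_1l, <- C, mul_inv_l; auto.
  - intros w' H1 H2. apply D; auto. rewrite gmul_1l in H2. rewrite H2, mul_inv_r; auto.
Qed.

Lemma glen_ne c k : glen c k -> 1 <= k -> c <> one.
Proof.
  intros [_ D] Hk E. assert (k <= length (@nil G)) by (apply D; [intros s []|simpl; rewrite gmul_1l; auto]).
  simpl in H; lia.
Qed.

Lemma glen_ball c k : glen c k -> In c (Ball k).
Proof.
  intros [[w [A [B C]]] _]. apply in_Ball. exists w. rewrite gmul_1l in C. repeat split; auto; lia.
Qed.

Definition wl (c : G) : nat := proj1_sig (constructive_indefinite_description _ (glen_ex c)).
Lemma wl_spec c : glen c (wl c).
Proof. unfold wl. destruct (constructive_indefinite_description _ _); auto. Qed.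

Definition winv (w : list G) : list G := rev (map inv w).
Lemma winv_prod w : wprod (winv w) = inv (wprod w).
Proof.
  induction w as [|s w IH]; simpl.
  - apply inv_unique. rewrite gmul_1l; auto.
  - unfold winv in *. simpl. rewrite wprod_app, IH. simpl. rewrite gmul_1r, inv_mul; auto.
Qed.
Lemma winv_in w : word_in Sg w -> word_in Sg (winv w).
Proof.
  intros H s Hs. unfold winv in Hs. apply in_rev in Hs. apply in_map_iff in Hs as [a [<- Ha]].
  apply Hsym, H; auto.
Qed.

Lemma wlen_ball t r : In t (Ball r) -> exists n, n <= r /\ wlen_eq Sg t n.
Proof.
  intros Ht. apply in_Ball in Ht as [u [A [B C]]].
  assert (Hex : exists n, exists w, word_in Sg w /\ length w = n /\ t ** wprod w = one).
  { exists (length u), (winv u). repeat split. apply winv_in; auto.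
    unfold winv; rewrite length_rev, length_map; auto.
    rewrite winv_prod, <- C, gmul_Vr; auto. }
  destruct (min_ex _ Hex) as [n [[w [A1 [B1 C1]]] D]].
  { exists n. split.
    + apply Nat.le_trans with (length u); auto. apply D. exists (winv u). repeat split.
      apply winv_in; auto. unfold winv; rewrite length_rev, length_map; auto.
      rewrite winv_prod, <- C, gmul_Vr; auto.
    + split; [eauto|intros w' H1 H2; apply D; eauto]. }
Qed.

Lemma greedy (c : G) : forall L, NoDup L -> exists T, NoDup T /\ incl T L /\ length L <= 3 * length T /\
  forall t t', In t T -> In t' T -> t <> t' -> t <> c ** t'.
Proof.
  intros L. remember (length L) as n eqn:En. revert L En.
  induction n as [n IH] using lt_wf_ind. intros L En Hn. subst n.
  destruct L as [|t L'].
  - exists []. split; [constructor|]. split; [intros a []|]. split; [simpl; lia|]. intros t t' [].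
  - inversion Hn as [|? ? Ht Hn']; subst.
    set (L'' := remove ceq (c ** t) (remove ceq (inv c ** t) L')).
    assert (HL'' : NoDup L'') by (apply NoDup_rem, NoDup_rem; auto).
    assert (Hlen : length L' <= S (S (length L''))).
    { assert (H1 := length_rem (inv c ** t) L' Hn').
      assert (H2 := length_rem (c ** t) _ (NoDup_rem (inv c ** t) L' Hn')). fold L'' in H2. lia. }
    assert (Hlt : length L'' < length (t :: L')).
    { assert (H1 := remove_length_le ceq L' (inv c ** t)). assert (H2 := remove_length_le ceq (remove ceq (inv c ** t) L') (c ** t)). fold L'' in H2. simpl; lia. }
    destruct (IH _ Hlt L'' eq_refl HL'') as [T [A [B [C D]]]].
    assert (HinL : forall y, In y L'' -> In y L' /\ y <> inv c ** t /\ y <> c ** t).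
    { intros y Hy. apply in_remove in Hy as [Hy1 Hy2]. apply in_remove in Hy1 as [Hy1 Hy3]. auto. }
    exists (t :: T). repeat split.
    + constructor; auto. intro H. apply B, HinL in H as [H _]. tauto.
    + intros y [<-|Hy]; simpl; auto. right. apply B, HinL in Hy; tauto.
    + simpl. lia.
    + intros a b [<-|Ha] [<-|Hb] Hab; try tauto.
      * apply B, HinL in Hb as [_ [Hb _]]. intro E. apply Hb. rewrite E, mul_inv_l; auto.
      * apply B, HinL in Ha as [_ [_ Ha]]. auto.
      * apply D; auto.
Qed.

Lemma mul_cancel_r x y t : x ** t = y ** t -> x = y.
Proof. intros H. rewrite <- (mul_inv_rr x t), <- (mul_inv_rr y t), H; auto. Qed.

Definition enum (n : nat) : G :=
  nth (snd (Cantor.of_nat n)) (map (@wprod G) (wle (fst (Cantor.of_nat n)))) one.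

Lemma enum_surj g : exists n, enum n = g.
Proof.
  destruct (Hgen g) as [w [A B]].
  assert (Hw : In w (wle (length w))) by (apply in_wle; auto).
  destruct (In_nth _ _ [] Hw) as [j [Hj Ej]].
  exists (Cantor.to_nat (length w, j)). unfold enum. rewrite Cantor.cancel_of_to. simpl.
  change one with (@wprod G []). rewrite map_nth, Ej; auto.
Qed.

Definition mu (g : G) : nat := proj1_sig (constructive_indefinite_description _ (enum_surj g)).
Lemma mu_spec g : enum (mu g) = g.
Proof. unfold mu. destruct (constructive_indefinite_description _ _); auto. Qed.
Lemma mu_inj g h : mu g = mu h -> g = h.
Proof. intros H. rewrite <- (mu_spec g), <- (mu_spec h), H; auto. Qed.

Definition Tc (c : G) : list G :=
  proj1_sig (constructive_indefinite_description _ (greedy c (Ball (1000 * wl c)) (Ball_nd _))).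
Lemma Tc_spec c : NoDup (Tc c) /\ incl (Tc c) (Ball (1000 * wl c)) /\
  bs (1000 * wl c) <= 3 * length (Tc c) /\
  forall t t', In t (Tc c) -> In t' (Tc c) -> t <> t' -> t <> c ** t'.
Proof. unfold Tc. destruct (constructive_indefinite_description _ _); auto. Qed.

Definition elsT (g c : G) (T : list G) := flat_map (fun t => [g ** t; g ** (c ** t)]) T.
Definition prsT (g c : G) (T : list G) := map (fun t => (mu (g ** t), mu (g ** (c ** t)))) T.

Lemma pvars_prs g c T : pvars (prsT g c T) = map mu (elsT g c T).
Proof. induction T; simpl; auto. rewrite IHT; auto. Qed.

Lemma in_els g c T y : In y (elsT g c T) <-> exists t, In t T /\ (y = g ** t \/ y = g ** (c ** t)).
Proof.
  unfold elsT. rewrite in_flat_map. split.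
  - intros [t [Ht Hy]]. exists t; split; auto. simpl in Hy. destruct Hy as [<-|[<-|[]]]; auto.
  - intros [t [Ht [->| ->]]]; exists t; simpl; auto.
Qed.

Lemma els_nd g c T : c <> one -> NoDup T ->
  (forall t t', In t T -> In t' T -> t <> t' -> t <> c ** t') -> NoDup (elsT g c T).
Proof.
  intros Hc. induction T as [|t T IH]; intros Hn Hcp; simpl; [constructor|].
  inversion Hn as [|? ? Ht Hn']; subst.
  assert (IH' := IH Hn' (fun a b Ha Hb => Hcp a b (or_intror Ha) (or_intror Hb))).
  constructor; [|constructor]; auto.
  - intros [E|E].
    + apply mul_cancel_l in E. apply Hc. apply (mul_cancel_r _ _ t). rewrite gmul_1l; auto.
    + apply in_els in E as [t' [Ht' [E|E]]]; apply mul_cancel_l in E.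
      * subst; tauto.
      * exact (Hcp t t' (or_introl eq_refl) (or_intror Ht') (fun H0 => Ht ltac:(rewrite H0; exact Ht')) E).
  - intro E. apply in_els in E as [t' [Ht' [E|E]]]; apply mul_cancel_l in E.
    + exact (Hcp t' t (or_intror Ht') (or_introl eq_refl) (fun H0 => Ht ltac:(rewrite <- H0; exact Ht')) (eq_sym E)).
    + apply mul_cancel_l in E. subst; tauto.
Qed.

Definition gE (n : nat) : G := enum (fst (Cantor.of_nat n)).
Definition cE (n : nat) : G := enum (snd (Cantor.of_nat n)).
Definition act (n : nat) : Prop :=
  mu (gE n) = fst (Cantor.of_nat n) /\ mu (cE n) = snd (Cantor.of_nat n) /\ 1 <= wl (cE n).

Definition evn (n : nat) : (nat -> bool) -> bool :=
  if excluded_middle_informative (act n) then pev (prsT (gE n) (cE n) (Tc (cE n))) else fun _ => false.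
Definition varsn (n : nat) : list nat :=
  if excluded_middle_informative (act n) then pvars (prsT (gE n) (cE n) (Tc (cE n))) else [].
Definition mE (n : nat) : nat := length (Tc (cE n)).
Definition xn (n : nat) : R :=
  if excluded_middle_informative (act n) then ((1/2) ^ (mE n / 4))%R else 0%R.
Definition pn (n : nat) : R :=
  if excluded_middle_informative (act n) then ((1/2) ^ (mE n))%R else 0%R.

Lemma evn_dep n : dep_on (varsn n) (evn n).
Proof.
  unfold evn, varsn. destruct (excluded_middle_informative _). apply pev_dep. intros b b' _; auto.
Qed.

Lemma act_ne n : act n -> cE n <> one.
Proof. intros [_ [_ H]]. apply (glen_ne _ _ (wl_spec _) H). Qed.

Lemma mE_big n : act n -> bs (1000 * wl (cE n)) <= 3 * mE n /\ 1001 <= bs (1000 * wl (cE n)).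
Proof.
  intros Ha. destruct (Tc_spec (cE n)) as [_ [_ [H _]]]. split; auto.
  assert (H2 := bs_grow (1000 * wl (cE n))). destruct Ha as [_ [_ H3]]. lia.
Qed.

Lemma xn_bound n : (0 <= xn n <= 1/2)%R.
Proof.
  unfold xn. destruct (excluded_middle_informative _) as [Ha|Ha]; [|lra].
  destruct (mE_big n Ha) as [Hm1 Hm2]. split. left; apply half_pow_pos.
  assert (Hq : (1 <= mE n / 4)%nat) by (apply Nat.div_le_lower_bound; lia).
  assert (H1 := half_pow_le 1 (mE n / 4) Hq). rewrite pow_1 in H1. lra.
Qed.

Lemma evn_prob n N : (forall i, In i (varsn n) -> i < N) -> (INR (cnt N (evn n)) <= pn n * 2 ^ N)%R.
Proof.
  unfold evn, varsn, pn. destruct (excluded_middle_informative _) as [Ha|Ha]; intros HN.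
  - destruct (Tc_spec (cE n)) as [A [B [C D]]].
    assert (Hnd : NoDup (pvars (prsT (gE n) (cE n) (Tc (cE n))))).
    { rewrite pvars_prs. apply FinFun.Injective_map_NoDup. intros a b; apply mu_inj.
      apply els_nd; auto. apply act_ne; auto. }
    assert (H := cnt_pev _ N Hnd HN). unfold prsT in H. rewrite length_map in H. fold (mE n) in H.
    apply (f_equal INR) in H. rewrite mult_INR, !INR_pow2 in H.
    assert (E : ((1/2) ^ (mE n) * 2 ^ (mE n) = 1)%R).
    { rewrite <- Rpow_mult_distr. replace (1/2 * 2)%R with 1%R by lra. apply pow1. }
    unfold prsT. right.
    replace (INR (cnt N (pev (map (fun t => (mu (gE n ** t), mu (gE n ** (cE n ** t)))) (Tc (cE n))))))
      with (INR (cnt N (pev (map (fun t => (mu (gE n ** t), mu (gE n ** (cE n ** t)))) (Tc (cE n))))) * ((1/2) ^ (mE n) * 2 ^ (mE n)))%R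
      by (rewrite E; ring).
    rewrite <- H. ring.
  - rewrite cnt_zero by auto. simpl. lra.
Qed.

Lemma sumR_app l1 l2 : sumR (l1 ++ l2) = (sumR l1 + sumR l2)%R.
Proof. induction l1; simpl; [ring|rewrite IHl1; ring]. Qed.

Lemma sumR_flat {T U} (w : U -> R) (F : T -> list U) l :
  sumR (map w (flat_map F l)) = sumR (map (fun k => sumR (map w (F k))) l).
Proof. induction l; simpl; auto. rewrite map_app, sumR_app, IHl; auto. Qed.

Lemma sumR_const {T} (c : R) (l : list T) : sumR (map (fun _ => c) l) = (INR (length l) * c)%R.
Proof.
  induction l; [simpl; ring|].
  change (sumR (map (fun _ => c) (a :: l))) with (c + sumR (map (fun _ => c) l))%R.
  change (length (a :: l)) with (S (length l)). rewrite IHl, S_INR; ring.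
Qed.

Lemma sumR_le {T} (f g : T -> R) l : (forall k, In k l -> f k <= g k)%R -> (sumR (map f l) <= sumR (map g l))%R.
Proof.
  induction l; intros H; simpl; [lra|].
  assert (f a <= g a)%R by (apply H; simpl; auto).
  assert (sumR (map f l) <= sumR (map g l))%R by (apply IHl; intros; apply H; simpl; auto). lra.
Qed.

Lemma sumR_scale {T} (c : R) (h : T -> R) l : sumR (map (fun k => (c * h k)%R) l) = (c * sumR (map h l))%R.
Proof. induction l; simpl; [ring|rewrite IHl; ring]. Qed.

Lemma length_els g c T : length (elsT g c T) = 2 * length T.
Proof. induction T; simpl; auto. rewrite IHT; lia. Qed.

Lemma le_fold_max k l : In k l -> k <= fold_right Nat.max 0 l.
Proof. induction l; simpl; [tauto|]. intros [<-|H]; [lia|]. specialize (IHl H); lia. Qed.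

Lemma evn_lll n L : NoDup L -> (forall f, In f L -> f <> n /\ exists i, In i (varsn n) /\ In i (varsn f)) ->
  (pn n <= xn n * prodR (map (fun f => 1 - xn f) L))%R.
Proof.
  intros HnL HL. unfold pn. destruct (excluded_middle_informative (act n)) as [Ha|Ha].
  2:{ unfold xn. destruct (excluded_middle_informative (act n)); [tauto|]. lra. }
  set (g := gE n). set (c := cE n). set (m := mE n).
  assert (Hact : forall f, In f L -> act f).
  { intros f Hf. destruct (HL f Hf) as [_ [i [_ Hi]]]. unfold varsn in Hi.
    destruct (excluded_middle_informative (act f)); auto. destruct Hi. }
  set (kf := fun f => wl (cE f)).
  set (K := fold_right Nat.max 0 (map kf L)).
  set (phi := fun f => (kf f, (gE f, cE f))).
  set (w := fun q : nat * (G * G) => ((1/2) ^ (bs (1000 * fst q) / 12))%R).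
  set (Gs := fun k' => map (fun q => fst q ** inv (snd q)) (list_prod (elsT g c (Tc c)) (Ball (1001 * k')))).
  set (M := flat_map (fun k' => map (fun p => (k', p)) (list_prod (Gs k') (Ball k'))) (seq 1 K)).
  assert (B1 : forall f, In f L -> (xn f <= w (phi f))%R).
  { intros f Hf. unfold xn. destruct (excluded_middle_informative (act f)) as [Hf'|Hf']; [|specialize (Hact f Hf); tauto].
    apply half_pow_le. change (bs (1000 * kf f) / 12 <= mE f / 4). destruct (mE_big f Hf') as [H1 _].
    apply Nat.div_le_lower_bound; [lia|]. fold (kf f) in H1.
    assert (H2 := Nat.Div0.mul_div_le (bs (1000 * kf f)) 12). lia. }
  assert (B2 : NoDup (map phi L)).
  { apply NoDup_map_in; auto. intros a b Hain Hbin E. unfold phi in E. injection E as E1 E2 E3.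
    destruct (Hact a Hain) as [A1 [A2 _]]. destruct (Hact b Hbin) as [B1' [B2' _]].
    rewrite <- (Cantor.cancel_to_of a), <- (Cantor.cancel_to_of b). f_equal.
    rewrite (surjective_pairing (Cantor.of_nat a)), (surjective_pairing (Cantor.of_nat b)).
    rewrite <- A1, <- A2, <- B1', <- B2', E2, E3; auto. }
  assert (B3 : incl (map phi L) M).
  { intros q Hq. apply in_map_iff in Hq as [f [<- Hf]].
    destruct (HL f Hf) as [_ [i [Hi1 Hi2]]]. assert (Haf := Hact f Hf).
    unfold varsn in Hi1, Hi2.
    destruct (excluded_middle_informative (act n)) as [_|]; [|tauto].
    destruct (excluded_middle_informative (act f)) as [_|]; [|tauto].
    rewrite pvars_prs in Hi1, Hi2. apply in_map_iff in Hi1 as [y [Ey Hy]]. apply in_map_iff in Hi2 as [y' [Ey' Hy']].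
    rewrite <- Ey' in Ey. apply mu_inj in Ey. subst y'.
    assert (Hu : exists u, In u (Ball (1001 * kf f)) /\ y = gE f ** u).
    { apply in_els in Hy' as [t [Ht Hyt]]. destruct (Tc_spec (cE f)) as [_ [Hinc _]].
      apply Hinc in Ht. destruct Hyt as [Hyt|Hyt].
      - exists t. split; auto. apply Ball_mono with (1000 * wl (cE f)); auto. unfold kf; lia.
      - exists (cE f ** t). split; auto.
        replace (1001 * kf f) with (wl (cE f) + 1000 * wl (cE f)) by (unfold kf; lia).
        apply Ball_mul; auto. apply glen_ball, wl_spec. }
    destruct Hu as [u [Hu Eu]].
    unfold M. apply in_flat_map. exists (kf f). split.
    - apply in_seq. destruct Haf as [_ [_ Hk]]. split; [exact Hk|].
      assert (kf f <= K) by (apply le_fold_max, in_map; auto). lia.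
    - change (phi f) with ((fun p => (kf f, p)) (gE f, cE f)). apply in_map. apply in_prod.
      + unfold Gs. apply in_map_iff. exists (y, u). split.
        * simpl. rewrite Eu, mul_inv_rr; auto.
        * apply in_prod; auto.
      + apply glen_ball, wl_spec. }
  assert (Hm := mE_big n Ha). fold c m in Hm.
  assert (B4 : (sumR (map w M) <= INR m / 16)%R).
  { unfold M. rewrite sumR_flat.
    apply Rle_trans with (sumR (map (fun k' => ((2 * INR m) * (1/2) ^ (k' + 5))%R) (seq 1 K))).
    - apply sumR_le. intros k' Hk'. apply in_seq in Hk' as [Hk1 Hk2].
      rewrite map_map.
      rewrite (map_ext _ (fun _ => ((1/2) ^ (bs (1000 * k') / 12))%R)) by (intros; reflexivity).
      rewrite sumR_const, length_prod. unfold Gs. rewrite length_map, length_prod, length_els.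
      fold (bs (1001 * k')) (bs k'). change (length (Tc c)) with m.
      set (beta := bs (1000 * k')).
      assert (Hb1 : S (1000 * k') <= beta) by apply bs_grow.
      assert (Hb2 : bs k' <= beta) by (apply bs_mono; lia).
      assert (Hb3 : bs (1001 * k') <= beta * bs k').
      { replace (1001 * k') with (1000 * k' + k') by lia. apply bs_add. }
      assert (Hk := nat_key beta k' Hk1 ltac:(lia)).
      assert (Ha' : bs (1001 * k') * bs k' * 2 ^ (k' + 5) <= 2 ^ (beta / 12)).
      { apply Nat.le_trans with (beta ^ 3 * 2 ^ (k' + 5)); auto. apply Nat.mul_le_mono_r.
        simpl. rewrite Nat.mul_1_r. rewrite Nat.mul_assoc. apply Nat.mul_le_mono; auto.
        apply Nat.le_trans with (beta * bs k'); auto. apply Nat.mul_le_mono_l; auto. }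
      assert (Hh := half_pow_inv _ _ _ Ha').
      rewrite !mult_INR. rewrite !mult_INR in Hh.
      assert (0 <= INR m)%R by apply pos_INR.
      replace (INR 2 * INR m * INR (bs (1001 * k')) * INR (bs k') * (1/2) ^ (beta / 12))%R
        with (INR 2 * INR m * (INR (bs (1001 * k')) * INR (bs k') * (1/2) ^ (beta / 12)))%R by ring.
      replace (INR 2) with 2%R by reflexivity.
      apply Rmult_le_compat_l; lra.
    - rewrite sumR_scale. assert (H := geom5 K). assert (0 <= INR m)%R by apply pos_INR. nra. }
  assert (Hsum : (sumR (map xn L) <= INR m / 16)%R).
  { apply Rle_trans with (sumR (map w (map phi L))); [apply sum_le_map; auto|].
    apply Rle_trans with (sumR (map w M)); auto. apply sum_incl; auto.
    intros q; unfold w; left; apply half_pow_pos. }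
  assert (Hprod : (exp (-2 * sumR (map xn L)) <= prodR (map (fun f => 1 - xn f) L))%R).
  { apply prodR_exp. intros f _. apply xn_bound. }
  unfold xn. destruct (excluded_middle_informative (act n)) as [_|]; [|tauto]. fold c m.
  assert (Hq : 4 * (m / 4) <= m) by apply Nat.Div0.mul_div_le.
  replace m with (m / 4 + (m - m / 4)) at 1 by lia. rewrite pow_add.
  apply Rmult_le_compat_l; [left; apply half_pow_pos|].
  apply Rle_trans with (exp (- INR (m - m / 4) / 2)); [apply half_pow_exp|].
  apply Rle_trans with (exp (-2 * sumR (map xn L))); auto.
  apply exp_le. rewrite minus_INR by lia.
  apply le_INR in Hq. rewrite mult_INR in Hq. replace (INR 4) with 4%R in Hq by (simpl; ring).
  assert (0 <= INR m)%R by apply pos_INR. lra.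
Qed.

End GroupPart.

Open Scope R_scope.

Theorem mainTheorem3 :
  exists A : R, 1 <= A /\
  forall (G : Group) (S : list G),
    @infinite_group G -> symmetric S -> generates S ->
    exists xi : G -> bool,
      forall (k : nat) (g h : G), (1 <= k)%nat -> dist_eq S g h k ->
        exists (t : G) (n : nat),
          wlen_eq S t n /\ INR n <= INR k * A /\
          xi (gmul G g t) <> xi (gmul G h t).
Proof.
  exists (INR 1000). split.
  { replace 1 with (INR 1) by reflexivity. apply le_INR. lia. }
  intros G S Hinf Hsym Hgen.
  destruct (lll_inf (evn S Hgen) (varsn S Hgen) (xn S Hgen) (pn S Hgen)) as [b Hb].
  - apply evn_dep.
  - intros n. destruct (xn_bound S Hinf Hgen n). lra.
  - apply evn_prob.
  - apply evn_lll; auto.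
  - exists (fun x => b (mu S Hgen x)). intros k g h Hk Hd.
    set (c := gmul G (ginv G g) h).
    assert (Hc : glen S c k) by (apply dist_glen; auto).
    assert (Hwl : wl S Hgen c = k) by (apply (glen_unique S c); [apply wl_spec|auto]).
    set (n := Cantor.to_nat (mu S Hgen g, mu S Hgen c)).
    assert (Eo : Cantor.of_nat n = (mu S Hgen g, mu S Hgen c)) by apply Cantor.cancel_of_to.
    assert (Eg : gE S n = g) by (unfold gE; rewrite Eo; apply mu_spec).
    assert (Ec : cE S n = c) by (unfold cE; rewrite Eo; apply mu_spec).
    assert (Ha : act S Hgen n).
    { unfold act. rewrite Eg, Ec, Eo, Hwl. simpl. auto. }
    specialize (Hb n). unfold evn in Hb.
    destruct (excluded_middle_informative (act S Hgen n)) as [_|]; [|tauto].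
    rewrite Eg, Ec in Hb.
    assert (Hex : exists t, In t (Tc S Hgen c) /\
      b (mu S Hgen (gmul G g t)) <> b (mu S Hgen (gmul G g (gmul G c t)))).
    { apply NNPP. intro Hn. assert (pev (prsT S Hgen g c (Tc S Hgen c)) b = true).
      { unfold pev. apply forallb_forall. intros p Hp. unfold prsT in Hp.
        apply in_map_iff in Hp as [t [<- Ht]]. unfold peq; simpl.
        destruct (b (mu S Hgen (gmul G g t))) eqn:E1, (b (mu S Hgen (gmul G g (gmul G c t)))) eqn:E2; auto;
        exfalso; apply Hn; exists t; split; auto; rewrite E1, E2; discriminate. }
      congruence. }
    destruct Hex as [t [Ht Hne]].
    destruct (Tc_spec S Hgen c) as [_ [Hinc _]]. apply Hinc in Ht. rewrite Hwl in Ht.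
    destruct (wlen_ball S Hsym t _ Ht) as [n' [Hn' Hw]].
    exists t, n'. split; [auto|split].
    + rewrite <- mult_INR. apply le_INR. lia.
    + replace (gmul G h t) with (gmul G g (gmul G c t)); auto.
      unfold c. rewrite !gmul_assoc, gmul_Vr, gmul_1l; auto.
Qed.
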